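(* Let $(I,\preceq)$ be a finite poset with $|I|=n$. For each $i\in I$ let $G_i$ be a finite group with a symmetric generating set $S_i$, $1_{G_i}\notin S_i$, and let $\mathcal{G}_i=Cay(G_i,S_i)$. For $i\in I$ put $A(i)=\{j\in I: j\succ i\}$ and $F_i=\{\phi:\prod_{j\in A(i)}G_j\to G_i\}$ (if $A(i)=\emptyset$, $F_i$ is identified with $G_i$), and let $G=\prod_{i\in I}F_i$ be the generalized wreath product of the groups $G_i$ (defined in the context). For $i\in I$ and $s_i\in S_i$ let $\overline{f_{i,s_i}}\in G$ be the element whose $i$-th coordinate is the function $\overline{s_i}:\prod_{j\in A(i)}G_j\to G_i$ taking the value $s_i$ at $(1_{G_j})_{j\in A(i)}$ and the value $1_{G_i}$ elsewhere, and whose $q$-th coordinate, for every $q\neq i$, is the constant function with value $1_{G_q}$. Let $S=\{\overline{f_{i,s_i}}: i\in I,\ s_i\in S_i\}$. Then $S$ generates $G$, and the generalized wreath product graph $\mathcal{G}$ of the graphs $\{\mathcal{G}_i\}_{i\in I}$ (defined in the context) is the Cayley graph $Cay(G,S)$: its vertex set is the underlying set of $G$, and two vertices $f,h$ are adjacent in $\mathcal{G}$ if and only if $h=f\sigma$ for some $\sigma\in S$.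
   Context: Cayley graph: for a group $H$ with finite symmetric generating set $T$, $1_H\notin T$, $Cay(H,T)$ has vertex set $H$ and $g\sim g'$ iff $gt=g'$ for some $t\in T$. Generalized wreath product of groups: let $X=\prod_{i\in I}G_i$; for $J\subseteq I$ write $x_J=(x_j)_{j\in J}$. An element $f=(f_i)_{i\in I}\in G=\prod_i F_i$ acts on the right on $X$ by $xf=y$ with $y_i=x_i\cdot f_i(x_{A(i)})$ for each $i$ (product in $G_i$). This action is faithful, and $G$ is the permutation group so obtained, with product $fh$ meaning ''first $f$, then $h$'', i.e. $x(fh)=(xf)h$; explicitly $(fh)_i(z)=f_i(z)\cdot h_i\big((z_j f_j(z_{A(j)}))_{j\in A(i)}\big)$ for $z\in\prod_{j\in A(i)}G_j$ (note $A(j)\subseteq A(i)$ for $j\in A(i)$). Generalized wreath product of the graphs $\mathcal{G}_i=Cay(G_i,S_i)$: the graph $\mathcal{G}$ has vertex set $\{(f_1,\ldots,f_n): f_i\in F_i\}$. For such a vertex $f$, define elements $e_j(f)\in G_j$ recursively (by induction along $\preceq$, starting from indices $j$ with $A(j)=\emptyset$) by $e_j(f)=f_j\big((e_k(f)^{-1})_{k\in A(j)}\big)$. Vertices $f$ and $h$ are adjacent iff there exists $i\in I$ such that (1) $f_j=h_j$ for every $j\neq i$; and (2) letting $p_i(f)=(e_k(f)^{-1})_{k\in A(i)}$, $f_i(z)=h_i(z)$ for all $z\neq p_i(f)$, and $f_i(p_i(f))$ and $h_i(p_i(f))$ are adjacent in $\mathcal{G}_i$. *)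

(* Defs.v *)
From HB Require Import structures.
From mathcomp Require Import all_boot all_order all_fingroup.
Set Implicit Arguments.
Unset Strict Implicit.
Unset Printing Implicit Defensive.
Import Order.TTheory.
Local Open Scope group_scope.

Section GWP.
Context {disp : Order.disp_t} {I : finPOrderType disp} (gT : I -> finGroupType).

Definition A (i : I) : pred I := fun j => (i < j)%O.

Definition prodOn (P : pred I) := {dffun forall j : {j : I | P j}, gT (sval j)}.

Definition restr (P : pred I) (x : forall i, gT i) : prodOn P :=
  finfun (fun j : {j : I | P j} => x (sval j)).

Definition Fi (i : I) := {ffun prodOn (A i) -> gT i}.

Definition F := {dffun forall i : I, Fi i}.

Definition sub_restr (i j : I) (Hij : A i j) (z : prodOn (A i)) : prodOn (A j) :=
  finfun (fun k : {k : I | A j k} =>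
            z (exist (fun k => A i k) (sval k) (lt_trans Hij (svalP k)))).

Definition wact (f : F) (x : forall i, gT i) : forall i, gT i :=
  fun i => x i * f i (restr (A i) x).

(* the product fh ("first f, then h"), as in the context:
   (fh)_i(z) = f_i(z) * h_i((z_j f_j(z_{A(j)}))_{j in A(i)}) *)
Definition wmul (f h : F) : F :=
  finfun (fun i : I => finfun (fun z : prodOn (A i) =>
    f i z * h i (finfun (fun j : {j : I | A i j} =>
                   z j * f (sval j) (sub_restr (svalP j) z))))).

Definition wone : F := finfun (fun i : I => finfun (fun _ : prodOn (A i) => (1 : gT i))).

Definition is_subgroup (H : F -> Prop) : Prop :=
  [/\ H wone,
      (forall f h, H f -> H h -> H (wmul f h)) &
      (forall f g, H f -> wmul f g = wone -> H g)].

Definition generates (Sg : F -> Prop) : Prop :=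
  forall H, is_subgroup H -> (forall s, Sg s -> H s) -> forall f, H f.

Definition sbar (i : I) (s : gT i) : Fi i :=
  [ffun z => if z == restr (A i) (fun k => 1) then s else 1].

Definition fbar (i : I) (s : gT i) : F :=
  finfun (dfwith (fun q : I => wone q) (sbar s)).

Definition inS (S : forall i, {set gT i}) (sigma : F) : Prop :=
  exists i, exists2 s, s \in S i & sigma = fbar s.

Definition cay_adj (H : finGroupType) (T : {set H}) (g g' : H) : Prop :=
  exists2 t, t \in T & g * t = g'.

Definition cayF_adj (Sg : F -> Prop) (f h : F) : Prop :=
  exists2 sigma, Sg sigma & h = wmul f sigma.

(* e_j(f) = f_j((e_k(f)^-1)_{k in A(j)}), defined by induction along the
   order starting from the j with A(j) empty.  Since every chain in I has
   fewer than #|I| elements, #|I| iterations of the defining equation from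
   any starting point yield the recursively defined family. *)
Definition estep (f : F) (E : forall i, gT i) : forall j, gT j :=
  fun j => f j (restr (A j) (fun k => (E k)^-1)).

Definition e (f : F) : forall j, gT j := iter #|I| (estep f) (fun k => 1).

Definition p (i : I) (f : F) : prodOn (A i) := restr (A i) (fun k => (e f k)^-1).

Definition wg_adj (S : forall i, {set gT i}) (f h : F) : Prop :=
  exists i : I,
    [/\ (forall j, j != i -> f j = h j),
        (forall z, z != p i f -> f i z = h i z) &
        cay_adj (S i) (f i (p i f)) (h i (p i f))].

End GWP.

(* Main.v *)
Require Import Defs.
From HB Require Import structures.
From mathcomp Require Import all_boot all_order all_fingroup.
Set Implicit Arguments.
Unset Strict Implicit.
Unset Printing Implicit Defensive.
Import Order.TTheory.
Local Open Scope group_scope.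

Section Proofs.
Context {disp : Order.disp_t} {I : finPOrderType disp} (gT : I -> finGroupType).

Local Notation F := (F gT).
Local Notation A := (@A disp I).

Lemma A_card_lt (j k : I) : A j k -> #|A k| < #|A j|.
Proof.
move=> Hjk; apply: proper_card; apply/properP; split.
  by apply/subsetP => x; rewrite !unfold_in /A => /(lt_trans Hjk).
by exists k; rewrite !unfold_in /A ?ltxx.
Qed.

Lemma A_card_I (j : I) : #|A j| < #|I|.
Proof.
apply: proper_card; apply/properP; split; first by apply/subsetP.
by exists j; rewrite !unfold_in /A ?ltxx.
Qed.

Definition E (f : F) n := iter n (estep f) (fun k => 1).

Lemma E_stable (f : F) : forall j n m, #|A j| < n -> #|A j| < m -> E f n j = E f m j.
Proof.
move=> j; move: {2}#|A j| (leqnn #|A j|) => N; elim: N j => [|N IH] j.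
  rewrite leqn0 => /eqP H0 [|n] [|m] //= _ _.
  rewrite /estep; congr (f j _); apply/ffunP => k; rewrite !ffunE.
  by have := A_card_lt (svalP k); rewrite H0.
move=> HN [|n] [|m] //= Hn Hm.
rewrite /estep; congr (f j _); apply/ffunP => k; rewrite !ffunE; congr (_^-1).
have Hk := A_card_lt (svalP k).
apply: IH; first by rewrite -ltnS (leq_trans Hk).
  by rewrite (leq_trans Hk).
by rewrite (leq_trans Hk).
Qed.

Lemma e_fix (f : F) j : e f j = f j (restr (A j) (fun k => (e f k)^-1)).
Proof.
have -> : e f j = E f #|I|.+1 j by apply: E_stable; rewrite ?A_card_I // ltnW // ltnS A_card_I.
done.
Qed.

Lemma p_char (f : F) i (z : prodOn gT (A i)) :
  (forall j : {j : I | A i j}, z j * f (sval j) (sub_restr (svalP j) z) = 1) <-> z = p i f.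
Proof.
split; last first.
  move=> -> j; rewrite /p /restr ffunE e_fix.
  have -> : sub_restr (svalP j) (restr (A i) (fun k => (e f k)^-1))
      = restr (A (sval j)) (fun k => (e f k)^-1).
    by apply/ffunP => k; rewrite !ffunE.
  by rewrite mulVg.
move=> Hz.
suff H : forall j : {j : I | A i j}, z j = (e f (sval j))^-1.
  by apply/ffunP => j; rewrite H /p /restr ffunE.
move=> j; move: {2}#|A (sval j)| (leqnn #|A (sval j)|) => N.
elim: N j => [|N IH] j HN.
  have := Hz j; move/(canRL (mulgK _)); rewrite mul1g => ->.
  rewrite e_fix; congr (f _ _)^-1; apply/ffunP => k.
  by have := leq_trans (A_card_lt (svalP k)) HN.
have := Hz j; move/(canRL (mulgK _)); rewrite mul1g => ->.
rewrite e_fix; congr (f _ _)^-1; apply/ffunP => k; rewrite !ffunE.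
rewrite IH //=; rewrite -ltnS; exact: leq_trans (A_card_lt (svalP k)) HN.
Qed.

Definition updc (f : F) (i : I) (v : Fi gT i) : F := finfun (dfwith (fun q => f q) v).
Arguments updc : clear implicits.
Lemma updc_in f i v : updc f i v i = v.
Proof. by rewrite ffunE dfwith_in. Qed.
Lemma updc_out f i v j : i != j -> updc f i v j = f j.
Proof. by move=> H; rewrite ffunE dfwith_out. Qed.

Definition upd1 (f : F) i (z : prodOn gT (A i)) (v : gT i) :=
  updc f i [ffun w => if w == z then v else f i w].
Arguments upd1 : clear implicits.

Lemma cond_eq (f : F) i (z : prodOn gT (A i)) :
  ((finfun (fun j : {j : I | A i j} => z j * f (sval j) (sub_restr (svalP j) z)) : prodOn gT (A i))
     == restr (A i) (fun k => 1)) = (z == p i f).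
Proof.
apply/eqP/eqP => [H|H].
  apply/p_char => j; move/ffunP: H => /(_ j); rewrite !ffunE; done.
apply/ffunP => j; rewrite !ffunE; exact: (proj2 (p_char f z) H).
Qed.

Lemma key (f : F) i (s : gT i) : wmul f (fbar s) = upd1 f i (p i f) (f i (p i f) * s).
Proof.
apply/ffunP => q; rewrite /wmul ffunE; case: (eqVneq i q) => [<-|ne].
  rewrite /upd1 updc_in; apply/ffunP => z; rewrite !ffunE dfwith_in ffunE cond_eq.
  by case: eqP => [->|]; rewrite ?mulg1.
rewrite /upd1 (updc_out _ _ ne) /wone ffunE; apply/ffunP => z; rewrite !ffunE.
by rewrite dfwith_out // mulg1.
Qed.

Lemma p_local (f g : F) i : (forall j, A i j -> f j = g j) -> p i f = p i g.
Proof.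
move=> H.
suff He : forall n j, A i j -> E f n j = E g n j.
  by apply/ffunP => j; rewrite !ffunE; congr (_^-1); exact: He (svalP j).
elim=> [|n IH] j Hj //=.
rewrite /estep H //; congr (g j _); apply/ffunP => k; rewrite !ffunE IH //.
exact: lt_trans Hj (svalP k).
Qed.

Lemma p_upd1 (f : F) i z v : p i (upd1 f i z v) = p i f.
Proof.
apply: p_local => j Hj; rewrite /upd1 updc_out //.
by apply/eqP => Hij; move: Hj; rewrite -Hij /A ltxx.
Qed.

Lemma upd1_upd1 (f : F) i z v w : upd1 (upd1 f i z v) i z w = upd1 f i z w.
Proof.
apply/ffunP => q; case: (eqVneq i q) => [<-|ne].
  rewrite /upd1 !updc_in; apply/ffunP => y; rewrite !ffunE.
  by case: eqP.
by rewrite /upd1 /updc !ffunE !dfwith_out // ffunE dfwith_out.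
Qed.

Lemma upd1_id (f : F) i z : upd1 f i z (f i z) = f.
Proof.
apply/ffunP => q; case: (eqVneq i q) => [<-|ne].
  rewrite /upd1 !updc_in; apply/ffunP => y; rewrite !ffunE.
  by case: eqP => [->|].
by rewrite /upd1 /updc !ffunE !dfwith_out // ffunE dfwith_out.
Qed.

Definition fk (f : F) (i : I) (z : prodOn gT (A i)) (k : I) (b : bool) (Hb : A i k = b) : Fi gT k :=
  (if b as b0 return (A i k = b0 -> Fi gT k)
   then fun H => [ffun _ => (z (exist (fun k => A i k) k H))^-1]
   else fun _ => f k) Hb.

Definition fset (f : F) (i : I) (z : prodOn gT (A i)) : F :=
  finfun (fun k : I => fk f z (erefl (A i k))).

Lemma fk_out f i (z : prodOn gT (A i)) k b (Hb : A i k = b) : b = false -> fk f z Hb = f k.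
Proof. by case: b Hb. Qed.

Lemma fk_in f i (z : prodOn gT (A i)) k (H : A i k) b (Hb : A i k = b) : b = true ->
  fk f z Hb = [ffun _ => (z (exist (fun k => A i k) k H))^-1].
Proof. by case: b Hb => // Hb _ /=; rewrite (bool_irrelevance Hb H). Qed.

Lemma fset_out f i (z : prodOn gT (A i)) k : ~~ A i k -> fset f z k = f k.
Proof. by move=> H; rewrite ffunE fk_out // (negbTE H). Qed.

Lemma fset_in f i (z : prodOn gT (A i)) k (H : A i k) :
  fset f z k = [ffun _ => (z (exist (fun k => A i k) k H))^-1].
Proof. by rewrite ffunE (fk_in f z H). Qed.

Lemma p_fset f i (z : prodOn gT (A i)) : p i (fset f z) = z.
Proof.
apply/ffunP => [[k Hk]]; rewrite /p /restr ffunE /= e_fix (fset_in _ _ Hk) ffunE.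
by rewrite invgK.
Qed.

Variable S : forall i, {set gT i}.
Hypothesis HSgen : forall i, <<S i>> = [set: gT i].

Inductive reach (f : F) : F -> Prop :=
| reach_refl : reach f f
| reach_step h i (s : gT i) : reach f h -> s \in S i -> reach f (wmul h (fbar s)).

Lemma reach_trans f g h : reach f g -> reach g h -> reach f h.
Proof.
move=> Hfg; elim=> [|h' i s _ IH Hs] //; exact: reach_step IH Hs.
Qed.

Lemma word i (l : seq (gT i)) : all (mem (S i)) l ->
  forall f, reach f (upd1 f i (p i f) (f i (p i f) * \prod_(x <- l) x)).
Proof.
elim: l => [|x l IH] /=.
  by move=> _ f; rewrite big_nil mulg1 upd1_id; constructor.
case/andP => Hx Hl f.
have r1 : reach f (wmul f (fbar x)) by apply: reach_step Hx; constructor.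
apply: reach_trans r1 _; rewrite key.
have := IH Hl (upd1 f i (p i f) (f i (p i f) * x)).
rewrite p_upd1 upd1_upd1 big_cons mulgA.
suff -> : upd1 f i (p i f) (f i (p i f) * x) i (p i f) = f i (p i f) * x by [].
by rewrite /upd1 updc_in ffunE eqxx.
Qed.

Lemma point i f v : reach f (upd1 f i (p i f) v).
Proof.
have : (f i (p i f))^-1 * v \in <<S i>> by rewrite HSgen inE.
case/gen_prodgP => n [c Hc Hv].
have := word (l := [seq c k | k <- enum 'I_n]) _ f.
rewrite big_map enumT -Hv mulKVg; apply.
by apply/allP => x /mapP [k _ ->]; exact: Hc.
Qed.

Definition Ldef (j : I) := forall f h : F, (forall k, k != j -> f k = h k) -> reach f h.

Lemma multi (s : seq I) : (forall j, j \in s -> Ldef j) ->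
  forall f h : F, (forall k, k \notin s -> f k = h k) -> reach f h.
Proof.
elim: s => [|j s IH] HL f h Hfh.
  have -> : f = h by apply/ffunP => k; exact: Hfh.
  constructor.
apply: (@reach_trans _ (updc f j (h j))).
  apply: (HL j (mem_head _ _)) => k kj.
  by rewrite updc_out // eq_sym.
apply: IH => [k Hk|k Hk]; first by apply: HL; rewrite in_cons Hk orbT.
case: (eqVneq j k) => [<-|jk]; first by rewrite updc_in.
rewrite updc_out //; apply: Hfh; by rewrite in_cons negb_or eq_sym jk.
Qed.

Lemma Lstep i : (forall j, A i j -> Ldef j) -> Ldef i.
Proof.
move=> HLA.
have Hm : forall f h : F, (forall k, ~~ A i k -> f k = h k) -> reach f h.
  move=> f h H; apply: (multi (s := enum (A i))).
    by move=> j; rewrite mem_enum => Hj; apply: HLA.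
  by move=> k; rewrite mem_enum => Hk; apply: H.
have niA : ~~ A i i by rewrite /A ltxx.
have SP : forall f (z : prodOn gT (A i)) v, reach f (upd1 f i z v).
  move=> f z v; set f1 := fset f z.
  have Hf1 : forall k, ~~ A i k -> f1 k = f k by move=> k Hk; exact: fset_out.
  have r1 : reach f f1 by apply: Hm => k Hk; exact/esym/Hf1.
  have r2 : reach f1 (upd1 f1 i z v) by rewrite -{1}(p_fset f z); apply: point.
  have r3 : reach (upd1 f1 i z v) (upd1 f i z v).
    apply: Hm => k Hk; case: (eqVneq i k) => [<-|ik].
      rewrite /upd1 !updc_in; apply/ffunP => w; by rewrite !ffunE fk_out // (negbTE niA).
    rewrite /upd1 !updc_out //. exact: Hf1.
  exact: reach_trans (reach_trans r1 r2) r3.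
move=> f h Hfh.
suff : forall (zs : seq (prodOn gT (A i))) (f : F), (forall k, k != i -> f k = h k) ->
    (forall z, z \notin zs -> f i z = h i z) -> reach f h.
  by move/(_ (enum (prodOn gT (A i))) f Hfh); apply => z; rewrite mem_enum.
clear Hfh; elim=> [|z zs IH] {}f Hfh Hz.
  have -> : f = h; last by constructor.
  apply/ffunP => k; case: (eqVneq k i) => [->|ki]; last exact: Hfh.
  by apply/ffunP => z; apply: Hz.
apply: reach_trans (SP f z (h i z)) _.
apply: IH => [k ki|w Hw].
  by rewrite /upd1 updc_out ?Hfh // eq_sym.
rewrite /upd1 updc_in ffunE; case: eqP => [->//|/eqP wz].
by apply: Hz; rewrite in_cons negb_or wz.
Qed.

Lemma L_all i : Ldef i.
Proof.
move: {2}#|A i| (leqnn #|A i|) => N; elim: N i => [|N IH] i HN; apply: Lstep => j Hj.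
  by have := leq_trans (A_card_lt Hj) HN.
apply: IH; rewrite -ltnS; exact: leq_trans (A_card_lt Hj) HN.
Qed.

Lemma all_reach f : reach (wone gT) f.
Proof.
by apply: (multi (s := enum I)) => [j _|k]; [apply: L_all | rewrite mem_enum].
Qed.

End Proofs.

Theorem theorem3p14 (disp : Order.disp_t) (I : finPOrderType disp)
  (gT : I -> finGroupType) (S : forall i, {set gT i})
  (HSgen : forall i, <<S i>> = [set: gT i])
  (HSsym : forall i (x : gT i), x \in S i -> x^-1 \in S i)
  (HS1 : forall i, (1 : gT i) \notin S i) :
  generates (inS S) /\
  (forall f h : F gT, wg_adj S f h <-> cayF_adj (inS S) f h).
Proof.
split.
  move=> H [H1 Hmul _] HS f.
  elim: (all_reach HSgen f) => // h i s _ IH Hs.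
  apply: Hmul => //; apply: HS; exists i; by exists s.
move=> f h; split.
  case=> i [Hout Hz [t Ht Heq]].
  exists (fbar t); first by exists i; exists t.
  rewrite key; apply/ffunP => q; case: (eqVneq i q) => [<-|iq].
    rewrite /upd1 updc_in; apply/ffunP => z; rewrite ffunE.
    case: eqP => [->|/eqP zp]; first by rewrite Heq.
    by rewrite Hz.
  by rewrite /upd1 updc_out // Hout // eq_sym.
case=> _ [i [t Ht ->]] ->.
rewrite key; exists i; split.
- by move=> j ji; rewrite /upd1 updc_out // eq_sym.
- by move=> z zp; rewrite /upd1 updc_in ffunE (negbTE zp).
- by exists t => //; rewrite /upd1 updc_in ffunE eqxx.
Qed.
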